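(* Let $P$ be a map and let $M$ be its phial, and suppose $G_M$ is connected. Then $\chi(P)\le 3-|V(G_M)|+\gamma$, where $\gamma$ is the dimension of the bicycle space of $G_M$. Moreover, equality holds if and only if $P$ is rich.
   Context: A map is a triple $X=(C_X,v_X,f_X)$ where $C_X$ is a finite cubic graph (multiple edges allowed) and $v_X,f_X$ are disjoint perfect matchings whose union is a disjoint union of 4-cycles, the squares of $X$. $a_X=E(C_X)\setminus(v_X\cup f_X)$; $z_X$ is the matching of square diagonals; $Q_X=C_X\cup z_X$. $\chi(X)=\#\{\text{cycles of }v_X\cup a_X\}-\#\text{squares}+\#\{\text{cycles of }f_X\cup a_X\}$. $G_X$ has vertices the cycles of $v_X\cup a_X$ and edges the squares, each joining the cycles containing its two $v_X$-edges. The dual of $X$ is $(C_X,f_X,v_X)$ and the phial is $(Q_X\setminus v_X,z_X,f_X)$ (the phial of the phial is $X$). Edge sets of the graphs of $X$, its dual $D$ and phial are identified with the squares; $V_X,F_X,Z_X$ are their $GF(2)$-coboundary spaces; with $\perp$ w.r.t. $|A\cap B|\bmod 2$, $V_X^\perp$ is the cycle space of $G_X$; one has $F_X+Z_X\subseteq V_X^\perp$, and $X$ is rich if $V_X^\perp=F_X+Z_X$. The bicycle space of a graph is the intersection of its cycle and coboundary spaces. *)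

(* Defs.v *)
From mathcomp Require Import all_boot all_order all_algebra.
Set Implicit Arguments.
Unset Strict Implicit.
Unset Printing Implicit Defensive.

(* The vertex set of the cubic graph C_X is a finite type D.  Each of the   *)
(* three perfect matchings v_X, f_X, a_X is encoded by the fixed-point-free *)
(* involution sending a vertex to its partner in that matching (parallel    *)
(* edges between different matchings are allowed, which is how multiple     *)
(* edges of C_X arise).  v_X u f_X is a disjoint union of 4-cycles iff      *)
(* v x <> f x for all x and (v o f)^2 = id.                                 *)

Definition fpf_involution (D : finType) (g : D -> D) : Prop :=
  forall x : D, g (g x) = x /\ g x <> x.

Definition is_map (D : finType) (v f a : D -> D) : Prop :=
  [/\ fpf_involution v, fpf_involution f, fpf_involution a,
      (forall x, v x <> f x) & (forall x, v (f (v (f x))) = x)].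

Definition rel2 (D : finType) (g h : D -> D) : rel D :=
  fun x y => (y == g x) || (y == h x).

Definition comp (D : finType) (g h : D -> D) (x : D) : {set D} :=
  [set y | connect (rel2 g h) x y].

(* the set of cycles of g u h, each given by its vertex set *)
Definition cycles (D : finType) (g h : D -> D) : {set {set D}} :=
  [set comp g h x | x : D].

Definition squares (D : finType) (v f : D -> D) : {set {set D}} := cycles v f.

Definition chi (D : finType) (v f a : D -> D) : int :=
  (#|cycles v a|%:Z - #|squares v f|%:Z + #|cycles f a|%:Z)%R.

(* z_X : x |-> the opposite vertex of its square *)
Definition zmatch (D : finType) (v f : D -> D) : D -> D := fun x => v (f x).

Definition dual_v (D : finType) (v f a : D -> D) := f.
Definition dual_f (D : finType) (v f a : D -> D) := v.
Definition phial_v (D : finType) (v f a : D -> D) := zmatch v f.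
Definition phial_f (D : finType) (v f a : D -> D) := f.
(* (the a-matching is unchanged in both: a_D = a_X and Q_X \ v_X \ (z u f) = a_X) *)

(* Finite multigraphs with vertex set Vt : {set V}, edge set Et : {set E},  *)
(* and an endpoint function (loops allowed).                                 *)

(* G_X: vertices = cycles of v u a; edges = squares; a square s containing x *)
(* joins the cycle containing its v-edge {x, v x} with the cycle containing *)
(* its other v-edge {f x, v (f x)}.  The endpoints are computed from an      *)
(* arbitrary vertex of s; the unordered pair does not depend on the choice. *)
Definition Gends (D : finType) (v f a : D -> D) (s : {set D})
  : {set D} * {set D} :=
  match [pick x in s] with
  | Some x => (comp v a x, comp v a (f x))
  | None => (set0, set0)
  end.

Definition GV (D : finType) (v f a : D -> D) : {set {set D}} := cycles v a.
Definition GE (D : finType) (v f a : D -> D) : {set {set D}} := squares v f.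

Section Graphs.
Variables (V E : finType) (Vt : {set V}) (Et : {set E}) (ends : E -> V * V).

Definition cobound (U : {set V}) : {set E} :=
  [set e in Et | ((ends e).1 \in U) != ((ends e).2 \in U)].

Definition coboundary_space : {set {set E}} := [set cobound U | U : {set V}].

(* degree of w in the spanning subgraph with edge set A (loops count twice) *)
Definition sdeg (A : {set E}) (w : V) : nat :=
  #|[set e in A | (ends e).1 == w]| + #|[set e in A | (ends e).2 == w]|.

Definition cycle_space : {set {set E}} :=
  [set A : {set E} | (A \subset Et) && [forall w in Vt, ~~ odd (sdeg A w)]].

Definition bicycle_space : {set {set E}} := cycle_space :&: coboundary_space.

Definition adjacent : rel V :=
  fun w1 w2 => [exists e in Et,
    (((ends e).1 == w1) && ((ends e).2 == w2)) ||
    (((ends e).1 == w2) && ((ends e).2 == w1))].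

Definition connected_graph : Prop :=
  (0 < #|Vt|)%N /\ forall w1 w2, w1 \in Vt -> w2 \in Vt -> connect adjacent w1 w2.
End Graphs.

(* dimension of a GF(2)-subspace, given as a set of vectors (edge sets) *)
Definition gf2_dim (E : finType) (S : {set {set E}}) : nat := logn 2 #|S|.

Definition perp (E : finType) (Et : {set E}) (S : {set {set E}})
  : {set {set E}} :=
  [set A : {set E} | (A \subset Et) && [forall B in S, ~~ odd #|A :&: B|]].

Definition symdiff (E : finType) (A B : {set E}) : {set E} :=
  (A :\: B) :|: (B :\: A).

Definition space_sum (E : finType) (S1 S2 : {set {set E}}) : {set {set E}} :=
  [set symdiff A B | A in S1, B in S2].

Definition cobspace (D : finType) (v f a : D -> D) : {set {set {set D}}} :=
  coboundary_space (GE v f a) (Gends v f a).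

Definition V_sp (D : finType) (v f a : D -> D) := cobspace v f a.
Definition F_sp (D : finType) (v f a : D -> D) :=
  cobspace (dual_v v f a) (dual_f v f a) a.
Definition Z_sp (D : finType) (v f a : D -> D) :=
  cobspace (phial_v v f a) (phial_f v f a) a.

Definition rich (D : finType) (v f a : D -> D) : Prop :=
  perp (squares v f) (V_sp v f a) = space_sum (F_sp v f a) (Z_sp v f a).

(* Main.v *)
From Pilot Require Import Defs.
From mathcomp Require Import all_boot all_order all_algebra all_fingroup all_character.
From mathcomp Require Import ring zify.
Import Pilot.Defs.
Set Implicit Arguments.
Unset Strict Implicit.
Unset Printing Implicit Defensive.
Import GRing.Theory Num.Theory.
Local Open Scope ring_scope.

Definition b2f (b : bool) : 'F_2 := b%:R.

Lemma F2_cases (x : 'F_2) : x = 0 \/ x = 1.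
Proof. case: x => [[|[|]]] //= ?; [left|right]; exact/val_inj. Qed.

Lemma F2_addxx (x : 'F_2) : x + x = 0.
Proof. by case: (F2_cases x) => ->; apply/val_inj. Qed.

Lemma b2f_neq b c : b2f (b != c) = b2f b + b2f c.
Proof. by case: b; case: c; rewrite /b2f /= ?addr0 ?add0r //; apply/val_inj. Qed.

Lemma b2f_and b c : b2f (b && c) = b2f b * b2f c.
Proof. by case: b; case: c; rewrite /b2f /= ?mulr0 ?mul0r ?mulr1. Qed.

Lemma b2f_nat n : (n%:R : 'F_2) = b2f (odd n).
Proof.
elim: n => [|n IH] //; rewrite mulrS IH /=.
by case: (odd n); rewrite /b2f /= ?addr0 //; apply/val_inj.
Qed.

Lemma b2f_eq0 b : (b2f b == 0) = ~~ b.
Proof. by case: b. Qed.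

Lemma b2f_inj : injective b2f.
Proof. by case; case => // /eqP; rewrite ?b2f_eq0 // eq_sym b2f_eq0. Qed.

Lemma F2_b2f (x : 'F_2) : b2f (x == 1) = x.
Proof. by case: (F2_cases x) => ->. Qed.

Lemma conn_closed (T : finType) (e : rel T) (S : pred T) x y :
  (forall z z', S z -> e z z' -> S z') -> S x -> connect e x y -> S y.
Proof.
move=> cl Sx /connectP[p ep ->]; elim: p x Sx ep => //= z p IH x Sx /andP[exz ep].
exact: IH (cl _ _ Sx exz) ep.
Qed.

Section Rel2.
Variables (D : finType) (g h : D -> D).
Hypotheses (gK : involutive g) (hK : involutive h).

Lemma rel2_sym : symmetric (rel2 g h).
Proof.
move=> x y; rewrite /rel2.
have E (k : D -> D) : involutive k -> (y == k x) = (x == k y).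
  by move=> kK; apply/eqP/eqP => ->.
by rewrite (E g gK) (E h hK).
Qed.

Lemma rel2_csym : connect_sym (rel2 g h).
Proof. exact/sym_connect_sym/rel2_sym. Qed.

Lemma in_comp (x y : D) : (y \in comp g h x) = connect (rel2 g h) x y.
Proof. by rewrite inE. Qed.

Lemma comp_mem (x : D) : x \in comp g h x.
Proof. by rewrite in_comp connect0. Qed.

Lemma comp_eqP (x y : D) : connect (rel2 g h) x y -> comp g h x = comp g h y.
Proof.
move=> cxy; apply/setP => z; rewrite !in_comp.
exact: (same_connect rel2_csym cxy).
Qed.

Lemma comp_g (x : D) : comp g h (g x) = comp g h x.
Proof. by apply/esym/comp_eqP/connect1; rewrite /rel2 eqxx. Qed.

Lemma comp_h (x : D) : comp g h (h x) = comp g h x.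
Proof. by apply/esym/comp_eqP/connect1; rewrite /rel2 eqxx orbT. Qed.

Lemma compP s (x : D) : s \in cycles g h -> x \in s -> s = comp g h x.
Proof.
case/imsetP => z _ -> xz; apply: comp_eqP; by rewrite -in_comp.
Qed.

Lemma comp_in (x : D) : comp g h x \in cycles g h.
Proof. exact: imset_f. Qed.

Lemma cycles_trivI : trivIset (cycles g h).
Proof.
apply/trivIsetP => A B HA HB neq; apply/pred0P => z /=.
apply/negbTE/negP => /andP[zA zB]; move/eqP: neq; apply.
by rewrite (compP HA zA) (compP HB zB).
Qed.

Lemma cycles_cover : cover (cycles g h) = setT.
Proof.
apply/setP => z; rewrite inE; apply/bigcupP; exists (comp g h z).
exact: comp_in. exact: comp_mem.
Qed.

Lemma sum_cycles (F : D -> 'F_2) :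
  \sum_(s in cycles g h) \sum_(y in s) F y = \sum_y F y.
Proof.
rewrite -(@big_trivIset _ _ _ _ _ F cycles_trivI) cycles_cover.
by apply: eq_bigl => y; rewrite inE.
Qed.
End Rel2.

Lemma comp_sym (D : finType) (g h : D -> D) x : comp g h x = comp h g x.
Proof.
apply/setP => y; rewrite !inE; apply: eq_connect => z w; by rewrite /rel2 orbC.
Qed.

Lemma cycles_sym (D : finType) (g h : D -> D) : cycles g h = cycles h g.
Proof. by apply: eq_imset => x; apply: comp_sym. Qed.

Lemma sum_inv0 (D : finType) (a : D -> D) (F : D -> 'F_2) :
  (forall x, a (a x) = x /\ a x <> x) -> (forall x, F (a x) = F x) ->
  \sum_y F y = 0.
Proof.
move=> Ha HF.
have aK : involutive a by move=> x; case: (Ha x).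
have ainj : injective a := inv_inj aK.
rewrite (bigID (fun y => enum_rank y < enum_rank (a y))%N) /=.
have -> : \sum_(i | ~~ (enum_rank i < enum_rank (a i))%N) F i =
          \sum_(i | (enum_rank i < enum_rank (a i))%N) F i.
  rewrite (reindex_inj ainj) /=; apply: eq_big => [y|y _]; last by rewrite HF.
  rewrite aK -leqNgt leq_eqVlt; case: eqP => //= /ord_inj/enum_rank_inj.
  by move=> E; case: (Ha y) => _; rewrite -E.
exact: F2_addxx.
Qed.

Definition rel3 (D : finType) (g h k : D -> D) : rel D :=
  fun x y => (y == g x) || (y == h x) || (y == k x).

Section Map.
Variables (D : finType) (v f a : D -> D).
Hypothesis H : is_map v f a.

Lemma vK : involutive v. Proof. by case: H => Hv _ _ _ _ x; case: (Hv x). Qed.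
Lemma fK : involutive f. Proof. by case: H => _ Hf _ _ _ x; case: (Hf x). Qed.
Lemma aK : involutive a. Proof. by case: H => _ _ Ha _ _ x; case: (Ha x). Qed.
Lemma v_neq x : v x != x. Proof. by case: H => Hv _ _ _ _; case: (Hv x) => _ /eqP. Qed.
Lemma f_neq x : f x != x. Proof. by case: H => _ Hf _ _ _; case: (Hf x) => _ /eqP. Qed.
Lemma vf_neq x : v x != f x. Proof. by case: H => _ _ _ Hvf _; apply/eqP. Qed.
Lemma vfC x : v (f x) = f (v x).
Proof.
case: H => _ _ _ _ Hsq; have := Hsq (f (v x)).
by rewrite fK vK.
Qed.

Lemma sq_set x : comp v f x = [set x; v x; f x; v (f x)].
Proof.
apply/setP => y; apply/idP/idP.
  rewrite in_comp => cxy.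
  apply: (@conn_closed _ _ (fun z => z \in [set x; v x; f x; v (f x)]) x y _ _ cxy); last by rewrite !inE eqxx.
  move=> z z' /=; rewrite !inE /rel2 -!orbA => Hz /orP[] /eqP ->; move: Hz;
  move=> /or4P[] /eqP ->; rewrite ?vK ?fK ?eqxx ?orbT //;
  by rewrite ?vfC ?fK ?vK ?eqxx ?orbT // -vfC ?eqxx ?orbT.
rewrite !inE -!orbA => /or4P[] /eqP ->.
- exact: connect0.
- by apply: connect1; rewrite /rel2 eqxx.
- by apply: connect1; rewrite /rel2 eqxx orbT.
- apply: (connect_trans (y := f x)); apply: connect1; by rewrite /rel2 eqxx ?orbT.
Qed.

Lemma sq_distinct x :
  [&& x != v x, x != f x, x != v (f x), v x != f x, v x != v (f x) & f x != v (f x)].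
Proof.
apply/and5P; split; try apply/andP; try split; rewrite 1?eq_sym ?v_neq ?f_neq ?vf_neq //.
- apply/eqP => E; move/eqP: (vf_neq x); apply; by rewrite -{1}E vK.
- by rewrite eq_sym vf_neq.
- by rewrite (inj_eq (inv_inj vK)) f_neq.
Qed.

Lemma sum_sq (F : D -> 'F_2) x :
  \sum_(y in comp v f x) F y = F x + F (v x) + F (f x) + F (v (f x)).
Proof.
case/and5P: (sq_distinct x) => d1 d2 d3 d4 /andP[d5 d6].
have -> : comp v f x = x |: (v x |: (f x |: [set v (f x)])).
  by rewrite sq_set; apply/setP => z; rewrite !inE !orbA.
rewrite big_setU1 /=; last by rewrite !inE !negb_or d1 d2 d3.
rewrite big_setU1 /=; last by rewrite !inE !negb_or d4 d5.
rewrite big_setU1 /=; last by rewrite !inE d6.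
by rewrite big_set1 !addrA.
Qed.

Lemma cut_mem U s x : s \in squares v f -> x \in s ->
  (s \in cobound (squares v f) (Gends v f a) U) =
  ((comp v a x \in U) != (comp v a (f x) \in U)).
Proof.
move=> Hs xs; rewrite inE Hs /= /Gends.
case: pickP => [y ys|]; last by move/(_ x); rewrite xs.
move: ys; rewrite (compP vK fK Hs xs) sq_set !inE -!orbA => /or4P[] /eqP ->.
- by [].
- by rewrite /= -vfC !(comp_g vK aK).
- by rewrite /= fK; case: (_ \in U); case: (_ \in U).
- rewrite /= -vfC fK !(comp_g vK aK).
  by case: (_ \in U); case: (_ \in U).
Qed.

Lemma ends_in e : e \in squares v f ->
  ((Gends v f a e).1 \in cycles v a) && ((Gends v f a e).2 \in cycles v a).
Proof.
move=> He; rewrite /Gends; case: pickP => [y _|]; first by rewrite /= !comp_in.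
case/imsetP: He => x _ -> /(_ x); by rewrite comp_mem.
Qed.

Hypothesis Hc : forall x y, connect (rel3 v f a) x y.

Lemma cut_kernel U : cobound (squares v f) (Gends v f a) U = set0 ->
  (cycles v a \subset U) || [disjoint cycles v a & U].
Proof.
move=> H0.
have inv x y : (comp v a x \in U) = (comp v a y \in U).
  apply/esym/eqP; apply: (@conn_closed _ _ (fun z => (comp v a z \in U) == (comp v a x \in U)) x y _ (eqxx _) (Hc x y)).
  move=> z z' /= /eqP <- /orP[/orP[]|] /eqP ->.
  - by rewrite (comp_g vK aK).
  - have := cut_mem U (comp_in v f z) (comp_mem v f z).
    by rewrite H0 inE => /esym/negbFE/eqP ->.
  - by rewrite (comp_h vK aK).
case: (pickP (fun x : D => x \in D)) => [x0 _|]; last first.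
  move=> H1; apply/orP; left; apply/subsetP => w /imsetP[x _]; by move: (H1 x).
case E: (comp v a x0 \in U).
  apply/orP; left; apply/subsetP => w /imsetP[x _ ->]; by rewrite (inv x x0).
apply/orP; right; apply/pred0P => w /=; apply/negbTE/nandP.
case Hw: (w \in cycles v a); last by left.
case/imsetP: Hw => x _ ->; right; by rewrite (inv x x0) E.
Qed.
End Map.

Lemma dual_map (D : finType) (v f a : D -> D) : is_map v f a -> is_map f v a.
Proof.
move=> H; case: (H) => Hv Hf Ha Hvf Hsq; split => // x.
  by move=> E; apply: (Hvf x).
by rewrite -(vfC H) (fK H) (vK H).
Qed.

Lemma phial_map (D : finType) (v f a : D -> D) :
  is_map v f a -> is_map (zmatch v f) f a.
Proof.
move=> H; case: (H) => Hv Hf Ha Hvf Hsq; rewrite /zmatch; split => // x.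
- split; first by apply: Hsq.
  move=> E; apply: (Hvf x); by rewrite -{1}E (vK H).
- move=> E; case: (Hv (f x)) => _; apply; exact E.
- by rewrite !(fK H) (vK H).
Qed.

Lemma card_F2 (T : finType) (A : {set T}) (P : pred T) :
  (#|[set e in A | P e]|%:R : 'F_2) = \sum_(e in A) b2f (P e).
Proof.
rewrite -sum1_card natr_sum big_mkcond /= [RHS]big_mkcond /=.
by apply: eq_bigr => e _; rewrite !inE; case: (e \in A); case: (P e).
Qed.

Lemma card_F2' (T : finType) (A : {set T}) :
  (#|A|%:R : 'F_2) = \sum_(e in A) 1.
Proof. by rewrite -sum1_card natr_sum. Qed.

Section Graph.
Variables (V E : finType) (Vt : {set V}) (Et : {set E}) (ends : E -> V * V).
Hypothesis Hends : forall e, e \in Et -> ((ends e).1 \in Vt) && ((ends e).2 \in Vt).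

Lemma cob_sub U : cobound Et ends U \subset Et.
Proof. by apply/subsetP => e; rewrite inE => /andP[]. Qed.

Lemma cob0 : cobound Et ends set0 = set0.
Proof. by apply/setP => e; rewrite !inE andbF. Qed.

Lemma cob_symdiff U U' :
  symdiff (cobound Et ends U) (cobound Et ends U') = cobound Et ends (symdiff U U').
Proof.
apply/setP => e; rewrite /symdiff !inE; case: (e \in Et) => //=.
by case: ((ends e).1 \in U); case: ((ends e).1 \in U');
   case: ((ends e).2 \in U); case: ((ends e).2 \in U').
Qed.

Lemma symdiff_xx (T : finType) (A : {set T}) : symdiff A A = set0.
Proof. by apply/setP => z; rewrite !inE; case: (z \in A). Qed.

Lemma cob_space0 : set0 \in coboundary_space Et ends.
Proof. by rewrite -cob0; apply: imset_f. Qed.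

Lemma cob_space_closed A B : A \in coboundary_space Et ends ->
  B \in coboundary_space Et ends -> symdiff A B \in coboundary_space Et ends.
Proof.
case/imsetP => U _ ->; case/imsetP => U' _ ->; rewrite cob_symdiff; exact: imset_f.
Qed.

Lemma cob_space_sub A : A \in coboundary_space Et ends -> A \subset Et.
Proof. case/imsetP => U _ ->; exact: cob_sub. Qed.

Lemma card_cob w0 : w0 \in Vt ->
  (forall U, cobound Et ends U = set0 -> (Vt \subset U) || [disjoint Vt & U]) ->
  #|coboundary_space Et ends| = (2 ^ (#|Vt|.-1))%N.
Proof.
move=> w0V Hker.
have -> : coboundary_space Et ends = (cobound Et ends) @: powerset (Vt :\ w0).
  apply/setP => B; apply/idP/idP; last first.
    by case/imsetP => U _ ->; apply: imset_f.
  case/imsetP => U _ ->.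
  case Hw: (w0 \in U).
    have -> : cobound Et ends U = cobound Et ends (Vt :\: U).
      apply/setP => e; rewrite !inE; case He: (e \in Et) => //=.
      case/andP: (Hends He) => -> ->.
      by case: ((ends e).1 \in U); case: ((ends e).2 \in U).
    apply: imset_f; rewrite powersetE; apply/subsetP => z; rewrite !inE.
    by case/andP => /negP zU ->; rewrite andbT; apply/eqP => Ez; apply: zU; rewrite Ez.
  have -> : cobound Et ends U = cobound Et ends (U :&: Vt).
    apply/setP => e; rewrite !inE; case He: (e \in Et) => //=.
    by case/andP: (Hends He) => -> ->; rewrite !andbT.
  apply: imset_f; rewrite powersetE; apply/subsetP => z; rewrite !inE.
  by case/andP => zU ->; rewrite andbT; apply/eqP => Ez; move: zU; rewrite Ez Hw.
rewrite card_in_imset; first by rewrite card_powerset (cardsD1 w0 Vt) w0V.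
move=> U1 U2; rewrite !powersetE => S1 S2 E12.
have : cobound Et ends (symdiff U1 U2) = set0 by rewrite -cob_symdiff E12 symdiff_xx.
move/Hker => /orP[] H.
  have := subsetP H w0 w0V; rewrite !inE.
  have -> : (w0 \in U1) = false by apply/negbTE/negP => /(subsetP S1); rewrite !inE eqxx.
  have -> : (w0 \in U2) = false by apply/negbTE/negP => /(subsetP S2); rewrite !inE eqxx.
  by [].
apply/setP => z.
case Hz: (z \in Vt).
  move/pred0P: H => /(_ z) /=; rewrite Hz /= !inE.
  by case: (z \in U1); case: (z \in U2).
have -> : (z \in U1) = false by apply/negbTE/negP => /(subsetP S1); rewrite !inE Hz andbF.
have -> : (z \in U2) = false by apply/negbTE/negP => /(subsetP S2); rewrite !inE Hz andbF.
by [].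
Qed.

Lemma sdeg_F2 (A : {set E}) (w : V) :
  ((sdeg ends A w)%:R : 'F_2) =
  \sum_(e in A) (b2f ((ends e).1 == w) + b2f ((ends e).2 == w)).
Proof. by rewrite /sdeg natrD !card_F2 big_split. Qed.

Lemma sum_b2f_eq (T : finType) (U : {set T}) (t : T) :
  \sum_(w in U) b2f (t == w) = b2f (t \in U).
Proof.
case tU: (t \in U).
  rewrite (bigD1 t) //= eqxx big1 ?addr0 // => w /andP[_ /negbTE].
  by rewrite eq_sym => ->.
by rewrite big1 // => w wU; case: eqP => // Ez; move: tU; rewrite Ez wU.
Qed.

Lemma parity_formula (A : {set E}) (U : {set V}) : A \subset Et ->
  b2f (odd #|A :&: cobound Et ends U|) =
  \sum_(w in U) ((sdeg ends A w)%:R : 'F_2).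
Proof.
move=> AE.
under eq_bigr => w _ do rewrite sdeg_F2.
rewrite exchange_big /= -b2f_nat card_F2'.
rewrite [RHS](eq_bigr (fun e => b2f ((ends e).1 \in U) + b2f ((ends e).2 \in U))); last first.
  by move=> e _; rewrite big_split /= !sum_b2f_eq.
rewrite big_mkcond [RHS]big_mkcond /=; apply: eq_bigr => e _.
rewrite !inE; case eA: (e \in A) => //=.
rewrite (subsetP AE _ eA) /= -b2f_neq; by case: (_ != _).
Qed.

Lemma cycle_perp : cycle_space Vt Et ends = perp Et (coboundary_space Et ends).
Proof.
apply/setP => A; rewrite !inE; case AE: (A \subset Et) => //=.
apply/forallP/forallP.
  move=> Hdeg B; apply/implyP => /imsetP[U _ ->].
  rewrite -b2f_eq0 parity_formula // big1 // => w _.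
  case wV: (w \in Vt).
    by move/implyP: (Hdeg w) => /(_ wV); rewrite b2f_nat => /negbTE ->.
  rewrite sdeg_F2 big1 // => e eA.
  case/andP: (Hends (subsetP AE _ eA)) => h1 h2.
  have -> : ((ends e).1 == w) = false by apply/negbTE/negP => /eqP Ez; move: h1; rewrite Ez wV.
  have -> : ((ends e).2 == w) = false by apply/negbTE/negP => /eqP Ez; move: h2; rewrite Ez wV.
  by rewrite addr0.
move=> Hperp w; apply/implyP => wV.
have := implyP (Hperp (cobound Et ends [set w])) (imset_f _ _).
rewrite -!b2f_eq0 parity_formula // big_set1 b2f_nat.
by apply; rewrite inE.
Qed.
End Graph.

Lemma rowdot (p q n : nat) (M1 : 'M['F_2]_(p, n)) (M2 : 'M['F_2]_(q, n)) i j :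
  (M1 *m M2^T) i j = (row i M1 *m (row j M2)^T) 0 0.
Proof. by rewrite !mxE; apply: eq_bigr => k _; rewrite !mxE. Qed.

Section Enc.
Variables (E : finType) (Et : {set E}).

Definition enc (A : {set E}) : 'rV['F_2]_#|Et| :=
  \row_(i < #|Et|) b2f (enum_val i \in A).

Lemma enc_inj (A B : {set E}) : A \subset Et -> B \subset Et -> enc A = enc B -> A = B.
Proof.
move=> AE BE Eq; apply/setP => e.
case He: (e \in Et); last first.
  apply/idP/idP => [/(subsetP AE)|/(subsetP BE)]; by rewrite He.
have := congr1 (fun x : 'rV_#|Et| => x 0 (enum_rank_in He e)) Eq.
by rewrite !mxE enum_rankK_in //; apply: b2f_inj.
Qed.

Lemma enc_symdiff (A B : {set E}) : enc (symdiff A B) = enc A + enc B.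
Proof.
apply/rowP => i; rewrite !mxE -b2f_neq /symdiff !inE.
by case: (enum_val i \in A); case: (enum_val i \in B).
Qed.

Lemma enc0 : enc set0 = 0.
Proof. by apply/rowP => i; rewrite !mxE inE. Qed.

Lemma enc_dot (A B : {set E}) : A \subset Et ->
  (enc A *m (enc B)^T) 0 0 = b2f (odd #|A :&: B|).
Proof.
move=> AE; rewrite -b2f_nat.
transitivity (\sum_(e in Et) b2f (e \in A) * b2f (e \in B)).
  rewrite mxE [RHS](big_enum_val (op := +%R : Monoid.com_law (0 : 'F_2))). by apply: eq_bigr => i _; rewrite !mxE.
have -> : A :&: B = [set e in Et | (e \in A) && (e \in B)].
  apply/setP => e; rewrite !inE; case eA: (e \in A) => /=; last by rewrite andbF.
  by rewrite (subsetP AE _ eA).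
by rewrite card_F2; apply: eq_bigr => e _; rewrite b2f_and.
Qed.

Definition dec (x : 'rV['F_2]_#|Et|) : {set E} :=
  [set e | [exists i, (enum_val i == e) && (x 0 i == 1)]].

Lemma dec_sub x : dec x \subset Et.
Proof.
apply/subsetP => e; rewrite inE => /existsP[i /andP[/eqP <- _]]; exact: enum_valP.
Qed.

Lemma decK x : enc (dec x) = x.
Proof.
apply/rowP => i; rewrite mxE inE.
have -> : [exists j, (enum_val j == enum_val i) && (x 0 j == 1)] = (x 0 i == 1).
  apply/existsP/idP => [[j /andP[/eqP /enum_val_inj -> //]]|H].
  by exists i; rewrite eqxx H.
exact: F2_b2f.
Qed.

Definition encS (S : {set {set E}}) : {set 'rV['F_2]_#|Et|} := enc @: S.

Definition subEt (S : {set {set E}}) := forall A, A \in S -> A \subset Et.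

Lemma card_encS (S : {set {set E}}) : subEt S -> #|encS S| = #|S|.
Proof. move=> HS; apply: card_in_imset => A B HA HB; exact: enc_inj (HS _ HA) (HS _ HB). Qed.

Lemma dim_rowg k (S : {set {set E}}) (M : 'M['F_2]_(k, #|Et|)) :
  subEt S -> encS S = rowg M -> gf2_dim S = \rank M.
Proof.
move=> HS Eq; rewrite /gf2_dim -card_encS // Eq card_rowg card_Fp //.
by rewrite pfactorK.
Qed.

Lemma encS_inj (S1 S2 : {set {set E}}) : subEt S1 -> subEt S2 -> encS S1 = encS S2 -> S1 = S2.
Proof.
move=> H1 H2 Eq.
have sub (Sa Sb : {set {set E}}) : subEt Sa -> subEt Sb -> encS Sa = encS Sb -> Sa \subset Sb.
  move=> Ha Hb Eab; apply/subsetP => A HA.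
  have : enc A \in encS Sb by rewrite -Eab; apply: imset_f.
  by case/imsetP => B HB /(enc_inj (Ha _ HA) (Hb _ HB)) ->.
by apply/eqP; rewrite eqEsubset !sub.
Qed.

Lemma encS_mem (S : {set {set E}}) (A : {set E}) : A \in S -> enc A \in encS S.
Proof. exact: imset_f. Qed.

Lemma space_rowg (S : {set {set E}}) : subEt S -> set0 \in S ->
  (forall A B, A \in S -> B \in S -> symdiff A B \in S) ->
  exists M : 'M['F_2]_(#|S|, #|Et|), encS S = rowg M.
Proof.
move=> HS H0 Hcl.
exists (\matrix_(i < #|S|) enc (enum_val i)).
apply/setP => x; rewrite mem_rowg; apply/idP/idP.
  case/imsetP => A HA ->.
  rewrite -(enum_rankK_in HA HA) -(rowK (fun i : 'I_#|S| => enc (enum_val i))).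
  exact: row_sub.
case/submxP => u ->; rewrite mulmx_sum_row.
apply: (big_ind (fun y => y \in encS S)).
- by rewrite -enc0; apply: imset_f.
- move=> y z /imsetP[A HA ->] /imsetP[B HB ->]; rewrite -enc_symdiff.
  by apply: imset_f; apply: Hcl.
- move=> i _; rewrite rowK; case: (F2_cases (u 0 i)) => ->.
    by rewrite scale0r -enc0; apply: imset_f.
  by rewrite scale1r; apply: imset_f; apply: enum_valP.
Qed.

Lemma perp_rowg k (S : {set {set E}}) (M : 'M['F_2]_(k, #|Et|)) :
  subEt S -> encS S = rowg M -> encS (perp Et S) = rowg (kermx M^T).
Proof.
move=> HS Eq; apply/setP => x; rewrite mem_rowg; apply/idP/idP.
  case/imsetP => A; rewrite inE => /andP[AE /forallP HA] ->.
  rewrite sub_kermx; apply/eqP/rowP => j; rewrite rowdot [RHS]mxE.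
  have : row j M \in encS S by rewrite Eq mem_rowg row_sub.
  case/imsetP => B HB ->.
  have -> : row 0 (enc A) = enc A by apply/rowP => l; rewrite mxE.
  rewrite enc_dot //.
  by move/implyP: (HA B) => /(_ HB) /negbTE ->.
move=> Hx; rewrite -(decK x); apply: imset_f; rewrite inE dec_sub /=.
apply/forallP => B; apply/implyP => HB.
rewrite -b2f_eq0 -enc_dot ?dec_sub // decK.
have : enc B \in rowg M by rewrite -Eq; apply: imset_f.
rewrite mem_rowg => /submxP[y ->].
rewrite trmx_mul mulmxA; move: Hx; rewrite sub_kermx => /eqP ->.
by rewrite mul0mx mxE.
Qed.

Lemma sum_rowg k1 k2 (S1 S2 : {set {set E}}) (M1 : 'M['F_2]_(k1, #|Et|)) (M2 : 'M['F_2]_(k2, #|Et|)) :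
  encS S1 = rowg M1 -> encS S2 = rowg M2 ->
  encS (space_sum S1 S2) = rowg (M1 + M2)%MS.
Proof.
move=> E1 E2; apply/setP => x; rewrite mem_rowg; apply/idP/idP.
  case/imsetP => C /imset2P[A B HA HB ->] ->; rewrite enc_symdiff.
  apply: addmx_sub_adds.
    by rewrite -mem_rowg -E1; apply: imset_f.
  by rewrite -mem_rowg -E2; apply: imset_f.
case/sub_addsmxP => u ->.
have : u.1 *m M1 \in encS S1 by rewrite E1 mem_rowg submxMl.
have : u.2 *m M2 \in encS S2 by rewrite E2 mem_rowg submxMl.
case/imsetP => B HB ->; case/imsetP => A HA ->.
rewrite -enc_symdiff; apply: imset_f; exact: imset2_f.
Qed.

Lemma cap_rowg k1 k2 (S1 S2 : {set {set E}}) (M1 : 'M['F_2]_(k1, #|Et|)) (M2 : 'M['F_2]_(k2, #|Et|)) :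
  subEt S1 -> subEt S2 -> encS S1 = rowg M1 -> encS S2 = rowg M2 ->
  encS (S1 :&: S2) = rowg (M1 :&: M2)%MS.
Proof.
move=> H1 H2 E1 E2; apply/setP => x; rewrite mem_rowg sub_capmx -!mem_rowg -E1 -E2.
apply/idP/idP.
  case/imsetP => A; rewrite inE => /andP[HA1 HA2] ->.
  by rewrite !imset_f.
case/andP => /imsetP[A HA ->] /imsetP[B HB EAB].
have AB := enc_inj (H1 _ HA) (H2 _ HB) EAB.
by apply: imset_f; rewrite inE HA AB HB.
Qed.

Lemma orth_mx k1 k2 (S1 S2 : {set {set E}}) (M1 : 'M['F_2]_(k1, #|Et|)) (M2 : 'M['F_2]_(k2, #|Et|)) :
  subEt S1 -> encS S1 = rowg M1 -> encS S2 = rowg M2 ->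
  (forall A B, A \in S1 -> B \in S2 -> ~~ odd #|A :&: B|) ->
  M1 *m M2^T = 0.
Proof.
move=> H1 E1 E2 Ho; apply/matrixP => i j; rewrite rowdot [RHS]mxE.
have : row i M1 \in encS S1 by rewrite E1 mem_rowg row_sub.
have : row j M2 \in encS S2 by rewrite E2 mem_rowg row_sub.
case/imsetP => B HB ->; case/imsetP => A HA ->.
rewrite enc_dot ?H1 //; by rewrite (negbTE (Ho _ _ HA HB)).
Qed.
End Enc.

Lemma main_mx (n k1 k2 k3 : nat) (MV : 'M['F_2]_(k1, n)) (MF : 'M['F_2]_(k2, n))
  (MZ : 'M['F_2]_(k3, n)) :
  MF *m MV^T = 0 -> MZ *m MV^T = 0 -> MF *m MZ^T = 0 -> (MV :&: MZ <= MF)%MS ->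
  [/\ (MF + MZ <= kermx MV^T)%MS,
      (MF :&: MZ <= kermx MZ^T :&: MZ)%MS,
      \rank (kermx MV^T) = (n - \rank MV)%N &
      ((kermx MV^T == MF + MZ)%MS -> (kermx MZ^T :&: MZ <= MF :&: MZ)%MS)].
Proof.
move=> oFV oZV oFZ T.
split.
- by rewrite addsmx_sub !sub_kermx oFV oZV !eqxx.
- rewrite sub_capmx capmxSr andbT sub_kermx.
  have /submxP[W ->] : (MF :&: MZ <= MF)%MS by apply: capmxSl.
  by rewrite -mulmxA oFZ mulmx0.
- by rewrite mxrank_ker mxrank_tr.
move=> /eqmxP EK.
set K := kermx MV^T; set Y := (kermx MZ^T :&: MZ)%MS.
have YZ : (Y <= MZ)%MS by apply: capmxSr.
have YkZ : (Y <= kermx MZ^T)%MS by apply: capmxSl.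
have YF : Y *m MF^T = 0.
  case/submxP: YZ => W ->; rewrite -mulmxA.
  have -> : MZ *m MF^T = (MF *m MZ^T)^T by rewrite [RHS]trmx_mul trmxK.
  by rewrite oFZ trmx0 mulmx0.
have YZt : Y *m MZ^T = 0 by apply/eqP; rewrite -sub_kermx.
have YK : (Y <= kermx K^T)%MS.
  rewrite sub_kermx.
  have : (K <= MF + MZ)%MS by rewrite EK.
  case/sub_addsmxP => u ->.
  by rewrite raddfD /= !trmx_mul mulmxDr !mulmxA YF YZt !mul0mx addr0.
have VK : (MV <= kermx K^T)%MS.
  rewrite sub_kermx; apply/eqP.
  have -> : MV *m K^T = (K *m MV^T)^T by rewrite [RHS]trmx_mul trmxK.
  by rewrite mulmx_ker trmx0.
have KV : (kermx K^T <= MV)%MS.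
  rewrite -(mxrank_leqif_sup VK).2 mxrank_ker mxrank_tr mxrank_ker mxrank_tr.
  by rewrite subKn ?rank_leq_col.
have YV : (Y <= MV)%MS by apply: submx_trans KV.
rewrite sub_capmx YZ andbT; apply: submx_trans T.
by rewrite sub_capmx YV YZ.
Qed.

Lemma parity_sum (E : finType) (Et A B : {set E}) : A \subset Et ->
  b2f (odd #|A :&: B|) = \sum_(s in Et) b2f (s \in A) * b2f (s \in B).
Proof.
move=> AE; rewrite -b2f_nat.
have -> : A :&: B = [set e in Et | (e \in A) && (e \in B)].
  apply/setP => e; rewrite !inE; case eA: (e \in A) => /=; last by rewrite andbF.
  by rewrite (subsetP AE _ eA).
by rewrite card_F2; apply: eq_bigr => e _; rewrite b2f_and.
Qed.

Section Main.
Variables (D : finType) (v f a : D -> D).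
Hypothesis H : is_map v f a.
Let HD : is_map f v a := dual_map H.
Let HM : is_map (zmatch v f) f a := phial_map H.
Let z := zmatch v f.
Let Et0 := squares v f.

Lemma sqD : squares f v = Et0.
Proof. exact: cycles_sym. Qed.

Lemma sqM : squares z f = Et0.
Proof.
apply: eq_imset => x; rewrite (sq_set HM) (sq_set H); apply/setP => y.
rewrite !inE /z /zmatch (fK H).
by case: (y == x); case: (y == v x); case: (y == f x); case: (y == v (f x)).
Qed.

Lemma cutV U s x : s \in Et0 -> x \in s ->
  (s \in cobound Et0 (Gends v f a) U) = ((comp v a x \in U) != (comp v a (f x) \in U)).
Proof. exact: cut_mem. Qed.

Lemma cutF U s x : s \in Et0 -> x \in s ->
  (s \in cobound Et0 (Gends f v a) U) = ((comp f a x \in U) != (comp f a (v x) \in U)).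
Proof. rewrite -sqD; exact: (cut_mem HD). Qed.

Lemma cutZ U s x : s \in Et0 -> x \in s ->
  (s \in cobound Et0 (Gends z f a) U) = ((comp z a x \in U) != (comp z a (f x) \in U)).
Proof. rewrite -sqM; exact: (cut_mem HM). Qed.

Lemma cVv (y : D) : comp v a (v y) = comp v a y. Proof. exact: (comp_g (vK H) (aK H) y). Qed.
Lemma cFf (y : D) : comp f a (f y) = comp f a y. Proof. exact: (comp_g (fK H) (aK H) y). Qed.
Lemma cFv (y : D) : comp f a (v (f y)) = comp f a (v y).
Proof. by rewrite (vfC H) (comp_g (fK H) (aK H)). Qed.
Lemma cZz (y : D) : comp z a (v (f y)) = comp z a y.
Proof. exact: (comp_g (vK HM) (aK H) y). Qed.
Lemma cZv (y : D) : comp z a (v y) = comp z a (f y).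
Proof. by rewrite -{1}(fK H y); exact: (comp_g (vK HM) (aK H) (f y)). Qed.
Lemma cVa (y : D) : comp v a (a y) = comp v a y. Proof. exact: (comp_h (vK H) (aK H) y). Qed.
Lemma cFa (y : D) : comp f a (a y) = comp f a y. Proof. exact: (comp_h (fK H) (aK H) y). Qed.
Lemma cZa (y : D) : comp z a (a y) = comp z a y. Proof. exact: (comp_h (vK HM) (aK H) y). Qed.

Lemma orth_gen (P Q : D -> bool) (A B : {set {set D}}) :
  A \subset Et0 ->
  (forall x, b2f (comp v f x \in A) * b2f (comp v f x \in B) =
             \sum_(y in comp v f x) b2f (P y) * b2f (Q y)) ->
  (forall y, P (a y) = P y) -> (forall y, Q (a y) = Q y) ->
  ~~ odd #|A :&: B|.
Proof.
move=> AE Hloc HP HQ; rewrite -b2f_eq0 (parity_sum _ AE).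
rewrite (_ : \sum_(s in Et0) _ = \sum_(s in Et0) \sum_(y in s) b2f (P y) * b2f (Q y)); last first.
  by apply: eq_bigr => s /imsetP[x _ ->]; apply: Hloc.
rewrite sum_cycles ?(vK H) ?(fK H) //.
- apply/eqP; apply: (sum_inv0 (a := a)).
    by case: H.
  by move=> y; rewrite HP HQ.
- exact: vK H.
- exact: fK H.
Qed.

Lemma orth_VF U U' :
  ~~ odd #|cobound Et0 (Gends v f a) U :&: cobound Et0 (Gends f v a) U'|.
Proof.
apply: (orth_gen (P := fun y => comp v a y \in U) (Q := fun y => comp f a y \in U')).
- exact: cob_sub.
- move=> x; rewrite (sum_sq H).
  rewrite (cutV _ (comp_in v f x) (comp_mem v f x)) (cutF _ (comp_in v f x) (comp_mem v f x)).
  rewrite !b2f_neq ?cVv ?cFv ?cFf; ring.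
- by move=> y; rewrite cVa.
- by move=> y; rewrite cFa.
Qed.

Lemma orth_VZ U U' :
  ~~ odd #|cobound Et0 (Gends v f a) U :&: cobound Et0 (Gends z f a) U'|.
Proof.
apply: (orth_gen (P := fun y => comp v a y \in U) (Q := fun y => comp z a y \in U')).
- exact: cob_sub.
- move=> x; rewrite (sum_sq H).
  rewrite (cutV _ (comp_in v f x) (comp_mem v f x)) (cutZ _ (comp_in v f x) (comp_mem v f x)).
  rewrite !b2f_neq ?cVv ?cZz ?cZv; ring.
- by move=> y; rewrite cVa.
- by move=> y; rewrite cZa.
Qed.

Lemma orth_FZ U U' :
  ~~ odd #|cobound Et0 (Gends f v a) U :&: cobound Et0 (Gends z f a) U'|.
Proof.
apply: (orth_gen (P := fun y => comp f a y \in U) (Q := fun y => comp z a y \in U')).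
- rewrite -sqD; exact: cob_sub.
- move=> x; rewrite (sum_sq H).
  rewrite (cutF _ (comp_in v f x) (comp_mem v f x)) (cutZ _ (comp_in v f x) (comp_mem v f x)).
  rewrite !b2f_neq ?cFv ?cFf ?cZz ?cZv; ring.
- by move=> y; rewrite cFa.
- by move=> y; rewrite cZa.
Qed.

Lemma T_set U U' :
  cobound Et0 (Gends v f a) U = cobound Et0 (Gends z f a) U' ->
  cobound Et0 (Gends v f a) U \in coboundary_space Et0 (Gends f v a).
Proof.
move=> Heq.
pose w y := (comp v a y \in U) (+) (comp z a y \in U').
have Hs x : ((comp v a x \in U) != (comp v a (f x) \in U)) =
            ((comp z a x \in U') != (comp z a (f x) \in U')).
  rewrite -(cutV U (comp_in v f x) (comp_mem v f x)) Heq.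
  exact: cutZ (comp_in v f x) (comp_mem v f x).
have winv y y' : connect (rel2 f a) y y' -> w y' = w y.
  move=> c; apply/eqP.
  apply: (@conn_closed _ _ (fun q => w q == w y) y y' _ (eqxx _) c).
  move=> p q /= /eqP <- /orP[] /eqP ->; apply/eqP.
    move: (Hs p); rewrite /w.
    by case: (_ \in U); case: (_ \in U); case: (_ \in U'); case: (_ \in U').
  by rewrite /w cVa cZa.
pose W := [set comp f a y | y in [pred y | w y]].
have memW y : (comp f a y \in W) = w y.
  apply/imsetP/idP => [[y' wy' Ey]|wy]; last by exists y.
  have : y \in comp f a y' by rewrite -Ey comp_mem.
  rewrite in_comp => /winv ->; exact: wy'.
have -> : cobound Et0 (Gends v f a) U = cobound Et0 (Gends f v a) W.
  apply/setP => s; case sE: (s \in Et0); last first.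
    apply/idP/idP => /(subsetP (cob_sub _ _ _)); by rewrite sE.
  have /imsetP[x _ Es] := sE.
  have xs : x \in s by rewrite Es comp_mem.
  rewrite (cutV _ sE xs) (cutF _ sE xs) !memW /w cVv cZv.
  move: (Hs x).
  by case: (_ \in U); case: (_ \in U); case: (_ \in U'); case: (_ \in U').
exact: imset_f.
Qed.
End Main.

Section Conn.
Variables (D : finType) (v f a : D -> D).
Hypothesis H : is_map v f a.
Let z := zmatch v f.

Lemma connM : connected_graph (cycles z a) (squares z f) (Gends z f a) ->
  forall x y, connect (rel3 z f a) x y.
Proof.
move=> [_ Hc] x y.
set R := rel3 z f a.
have inc p q : q \in comp z a p -> connect R p q.
  rewrite in_comp; apply: connect_sub => p' q'; rewrite /rel2 => /orP[] /eqP ->;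
  by apply: connect1; rewrite /R /rel3 eqxx ?orbT.
pose Good (w : {set D}) := [forall q in w, connect R x q].
have G0 : Good (comp z a x) by apply/forall_inP => q; exact: inc.
have step w1 w2 : Good w1 -> adjacent (squares z f) (Gends z f a) w1 w2 -> Good w2.
  move=> G1 /existsP[e /andP[He]]; rewrite /Gends; case: pickP => [p _|_] /=; last first.
    by case/orP => /andP[/eqP E1 /eqP E2]; subst w1 w2.
  case/orP => /andP[/eqP E1 /eqP E2]; subst w1 w2.
    apply/forall_inP => q Hq; apply: connect_trans (inc _ _ Hq).
    apply: (connect_trans (forall_inP G1 p (comp_mem z a p))).
    by apply: connect1; rewrite /R /rel3 eqxx orbT.
  apply/forall_inP => q Hq; apply: connect_trans (inc _ _ Hq).
  apply: (connect_trans (forall_inP G1 (f p) (comp_mem z a (f p)))).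
  by apply: connect1; rewrite /R /rel3 (fK H) eqxx orbT.
have := Hc _ _ (comp_in z a x) (comp_in z a y).
move/(conn_closed (S := Good) step G0) => /forall_inP; apply.
exact: comp_mem.
Qed.

Lemma connP : (forall x y, connect (rel3 z f a) x y) ->
  forall x y, connect (rel3 v f a) x y.
Proof.
move=> Hc x y; apply: (connect_sub _ (Hc x y)) => p q.
rewrite /rel3 => /orP[/orP[]|] /eqP ->.
- apply: (connect_trans (y := f p)); apply: connect1; by rewrite /rel3 eqxx ?orbT.
- by apply: connect1; rewrite /rel3 eqxx ?orbT.
- by apply: connect1; rewrite /rel3 eqxx ?orbT.
Qed.

Lemma connD : (forall x y, connect (rel3 v f a) x y) ->
  forall x y, connect (rel3 f v a) x y.
Proof.
move=> Hc x y; apply: (connect_sub _ (Hc x y)) => p q.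
rewrite /rel3 => /orP[/orP[]|] /eqP ->; by apply: connect1; rewrite /rel3 eqxx ?orbT.
Qed.
End Conn.

Lemma card_map_cob (D : finType) (v f a : D -> D) (x0 : D) :
  is_map v f a -> (forall x y, connect (rel3 v f a) x y) ->
  #|coboundary_space (squares v f) (Gends v f a)| = (2 ^ (#|cycles v a|.-1))%N.
Proof.
move=> H Hc; apply: (card_cob (@ends_in D v f a) (comp_in v a x0)).
exact: cut_kernel H Hc.
Qed.

Lemma perp_sub (E : finType) (Et : {set E}) S : subEt Et (perp Et S).
Proof. by move=> A; rewrite inE => /andP[]. Qed.

Lemma sum_sub (E : finType) (Et : {set E}) S1 S2 :
  subEt Et S1 -> subEt Et S2 -> subEt Et (space_sum S1 S2).
Proof.
move=> H1 H2 A /imset2P[B C HB HC ->]; apply/subsetP => e; rewrite !inE.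
by case/orP => /andP[_ He]; [apply: (subsetP (H1 _ HB)) | apply: (subsetP (H2 _ HC))].
Qed.

Lemma cap_sub (E : finType) (Et : {set E}) S1 S2 :
  subEt Et S1 -> subEt Et (S1 :&: S2).
Proof. by move=> H1 A; rewrite inE => /andP[/H1]. Qed.

Theorem theorem2p10 (D : finType) (v f a : D -> D) :
  is_map v f a ->
  connected_graph (GV (phial_v v f a) (phial_f v f a) a)
                  (GE (phial_v v f a) (phial_f v f a) a)
                  (Gends (phial_v v f a) (phial_f v f a) a) ->
  let nVM := #|GV (phial_v v f a) (phial_f v f a) a| in
  let gamma := gf2_dim (bicycle_space
                  (GV (phial_v v f a) (phial_f v f a) a)
                  (GE (phial_v v f a) (phial_f v f a) a)
                  (Gends (phial_v v f a) (phial_f v f a) a)) in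
  chi v f a <= 3 - nVM%:Z + gamma%:Z /\
  (chi v f a = 3 - nVM%:Z + gamma%:Z <-> rich v f a).
Proof.
move=> H Hconn nVM gamma.
rewrite /nVM /gamma; clear nVM gamma.
rewrite /GV /GE /phial_v /phial_f in Hconn *.
rewrite /rich /V_sp /F_sp /Z_sp /cobspace /dual_v /dual_f /phial_v /phial_f /GE /chi.
have HD := dual_map H; have HM := phial_map H.
set z := zmatch v f in Hconn *.
have cM := connM H Hconn.
have cP := connP cM.
have cD := connD cP.
have [x0 _] : exists x0 : D, true.
  case: Hconn => /card_gt0P[w /imsetP[x _ _]] _; by exists x.
have cardP := card_map_cob x0 H cP.
have cardD := card_map_cob x0 HD cD.
have cardM := card_map_cob x0 HM cM.
have sD : squares f v = squares v f := cycles_sym _ _.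
have sM := sqM H.
rewrite -/z in sM.
have endsM := @ends_in D z f a.
have cycM := cycle_perp endsM.
rewrite sD in cardD; rewrite sM in cardM cycM.
rewrite /bicycle_space sD sM cycM.
set Et0 := squares v f in cardP cardD cardM *.
set SV := coboundary_space Et0 (Gends v f a) in cardP *.
set SF := coboundary_space Et0 (Gends f v a) in cardD *.
set SZ := coboundary_space Et0 (Gends z f a) in cardM *.
have sV : subEt Et0 SV by move=> A; apply: cob_space_sub.
have sF : subEt Et0 SF by move=> A; apply: cob_space_sub.
have sZ : subEt Et0 SZ by move=> A; apply: cob_space_sub.
have [MV eV] := space_rowg sV (cob_space0 _ _) (@cob_space_closed _ _ _ _).
have [MF eF] := space_rowg sF (cob_space0 _ _) (@cob_space_closed _ _ _ _).
have [MZ eZ] := space_rowg sZ (cob_space0 _ _) (@cob_space_closed _ _ _ _).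
have rV : \rank MV = (#|cycles v a|.-1)%N.
  by rewrite -(dim_rowg sV eV) /gf2_dim cardP pfactorK.
have rF : \rank MF = (#|cycles f a|.-1)%N.
  by rewrite -(dim_rowg sF eF) /gf2_dim cardD pfactorK.
have rZ : \rank MZ = (#|cycles z a|.-1)%N.
  by rewrite -(dim_rowg sZ eZ) /gf2_dim cardM pfactorK.
have pos (g : D -> D) : (0 < #|cycles g a|)%N.
  by apply/card_gt0P; exists (comp g a x0); apply: comp_in.
have oFV : MF *m MV^T = 0.
  apply: (orth_mx sF eF eV) => A B /imsetP[U' _ ->] /imsetP[U _ ->].
  by rewrite setIC; apply: orth_VF.
have oZV : MZ *m MV^T = 0.
  apply: (orth_mx sZ eZ eV) => A B /imsetP[U' _ ->] /imsetP[U _ ->].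
  by rewrite setIC; apply: orth_VZ.
have oFZ : MF *m MZ^T = 0.
  apply: (orth_mx sF eF eZ) => A B /imsetP[U _ ->] /imsetP[U' _ ->].
  exact: orth_FZ.
have T : (MV :&: MZ <= MF)%MS.
  rewrite -rowgS -(cap_rowg sV sZ eV eZ) -eF.
  apply/subsetP => x /imsetP[A]; rewrite inE => /andP[/imsetP[U _ EU] /imsetP[U' _ EU']] ->.
  have EVZ : cobound Et0 (Gends v f a) U = cobound Et0 (Gends z f a) U' by rewrite -EU -EU'.
  by apply: imset_f; rewrite EU; apply: (T_set H EVZ).
have [sumK capIn rankK richImp] := main_mx oFV oZV oFZ T.
have ePV := perp_rowg sV eV.
have eS := sum_rowg eF eZ.
have eB := cap_rowg (@perp_sub _ Et0 SZ) sZ (perp_rowg sZ eZ) eZ.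
rewrite (dim_rowg (@cap_sub _ Et0 _ SZ (@perp_sub _ Et0 SZ)) eB).
have sc := mxrank_sum_cap MF MZ.
have h1 := mxrankS sumK.
have h2 := mxrankS capIn.
have h3 := rank_leq_col MV.
have p1 := pos v; have p2 := pos f; have p3 := pos z.
move: rankK rV rF rZ sc h1 h2 h3 p1 p2 p3.
set K := kermx MV^T.
set nP := #|cycles v a|; set nD := #|cycles f a|; set nM := #|cycles z a|.
set m := #|Et0|.
set rS := \rank (MF + MZ)%MS; set rC := \rank (MF :&: MZ)%MS.
set g := \rank (kermx MZ^T :&: MZ)%MS.
move=> rankK rV rF rZ sc h1 h2 h3 p1 p2 p3.
split.
  rewrite rankK in h1; lia.
split.
  move=> Heq.
  have eqS : rS = \rank K by rewrite rankK; lia.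
  have KS : (K <= MF + MZ)%MS.
    by rewrite -(mxrank_leqif_sup sumK).2; apply/eqP; exact: eqS.
  apply: (encS_inj (@perp_sub _ Et0 SV) (sum_sub sF sZ)).
  rewrite ePV eS; apply/eqP; rewrite eqEsubset !rowgS KS sumK //.
move=> Hrich.
have EK : (K == MF + MZ)%MS.
  have := congr1 (@encS _ Et0) Hrich; rewrite ePV eS => Er.
  by apply/andP; split; rewrite -rowgS Er.
have h4 := mxrankS (richImp EK).
have h5 : (\rank K <= rS)%N by apply: mxrankS; case/andP: EK.
rewrite rankK in h5 h1.
lia.
Qed.
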